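(* Suppose that $(R,\mathfrak m)$ is $F$-pure. Then $R$ has a unique largest proper fully $\Phi(E)$-special ideal, and this ideal is prime.
   Context: $(R,\mathfrak m)$ is a commutative Noetherian local ring of prime characteristic $p$. $R$ is $F$-pure if for every $R$-module $M$ the map $M\to R^{(1)}\otimes_RM$, $m\mapsto1\otimes m$, is injective ($R^{(1)}$ = $R$ with right structure via $r\mapsto r^p$). The Frobenius skew polynomial ring $R[x,f]$ consists of polynomials $\sum r_ix^i$, free left $R$-module on $(x^i)_{i\ge0}$, with $xr=r^px$. $E=E_R(R/\mathfrak m)$; $\Phi(E)=R[x,f]\otimes_RE=\bigoplus_nRx^n\otimes_RE$, with $0$th component identified with $E$. $\operatorname{ann}_{\Phi(E)}(\mathfrak aR[x,f])$ is the submodule of elements annihilated by all $rx^n$, $r\in\mathfrak a$, $n\ge0$; $\mathfrak a$ is fully $\Phi(E)$-special if $(0:_E\mathfrak a)$ is contained in the $0$th component of $\operatorname{ann}_{\Phi(E)}(\mathfrak aR[x,f])$. *)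

(* Defs.v *)
From HB Require Import structures.
From mathcomp Require Import all_boot all_order all_algebra.
Set Implicit Arguments. Unset Strict Implicit. Unset Printing Implicit Defensive.
Import GRing.Theory.
Local Open Scope ring_scope.

Section CommAlg.
Variable R : comNzRingType.

Definition is_idealP (I : R -> Prop) : Prop :=
  [/\ I 0, (forall x y, I x -> I y -> I (x + y)) & (forall r x, I x -> I (r * x))].

Definition proper_idealP (I : R -> Prop) : Prop := is_idealP I /\ ~ I 1.

Definition prime_idealP (I : R -> Prop) : Prop :=
  proper_idealP I /\ (forall x y, I (x * y) -> I x \/ I y).

Definition subideal (I J : R -> Prop) : Prop := forall x, I x -> J x.

Definition fin_generated (I : R -> Prop) : Prop :=
  exists s : seq R, forall x, I x <->
    exists c : seq R, size c = size s /\ x = \sum_(i < size s) c`_i * s`_i.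

Definition noetherian_ring : Prop :=
  forall I : R -> Prop, is_idealP I -> fin_generated I.

Definition local_ring (m : R -> Prop) : Prop :=
  proper_idealP m /\ (forall I, proper_idealP I -> subideal I m).

(* The bimodule R x^n of R[x,f]: left structure by multiplication, right
   structure (s x^n) r = s r^(p^n) x^n.  A map beta : R -> M -> N into an
   abelian group is "n-balanced" if it is biadditive and
   beta (s * r^(p^n)) v = beta s (r *: v).  The tensor product
   R x^n (x)_R M is the universal abelian group for such maps, so
   (s x^n) (x) v = 0 in R x^n (x)_R M iff every n-balanced map kills (s, v). *)
Definition frob_balanced (p n : nat) (M : lmodType R) (N : zmodType)
  (beta : R -> M -> N) : Prop :=
  [/\ (forall s s' v, beta (s + s') v = beta s v + beta s' v),
      (forall s v v', beta s (v + v') = beta s v + beta s v') &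
      (forall s r v, beta (s * r ^+ (p ^ n)) v = beta s (r *: v))].

Definition frob_tensor_zero (p n : nat) (M : lmodType R) (s : R) (v : M) : Prop :=
  forall (N : zmodType) (beta : R -> M -> N), frob_balanced p n beta -> beta s v = 0.

(* F-purity: for every R-module M, M -> R^(1) (x)_R M, v |-> 1 (x) v is injective. *)
Definition F_pure (p : nat) : Prop :=
  forall (M : lmodType R) (v : M), frob_tensor_zero p 1 1 v -> v = 0.

Definition injective_module (E : lmodType R) : Prop :=
  forall (M N : lmodType R) (f : {linear M -> N}) (g : {linear M -> E}),
    injective f -> exists h : {linear N -> E}, forall x, h (f x) = g x.

(* E is an injective hull E_R(R/m): E is injective and is an essential
   extension of a submodule R e0 isomorphic to R/m (i.e. ann e0 = m). *)
Definition injective_hull_residue (m : R -> Prop) (E : lmodType R) : Prop :=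
  injective_module E /\
  exists e0 : E, (forall r, r *: e0 = 0 <-> m r) /\
    (forall e : E, e <> 0 -> exists r s, r *: e <> 0 /\ r *: e = s *: e0).

(* a is fully Phi(E)-special: (0 :_E a) lies in the 0th component of
   ann_{Phi(E)}(a R[x,f]), i.e. for every e in E with a e = 0, every r in a and
   every n, the element r x^n . e = (r x^n) (x) e of R x^n (x)_R E vanishes. *)
Definition fully_special (p : nat) (E : lmodType R) (a : R -> Prop) : Prop :=
  forall e : E, (forall r, a r -> r *: e = 0) ->
    forall (r : R) (n : nat), a r -> frob_tensor_zero p n r e.

End CommAlg.

(* Main.v *)
Require Import Defs.
From HB Require Import structures.
From mathcomp Require Import all_boot all_order all_algebra.
From Stdlib Require Import ClassicalEpsilon Classical.
From mathcomp Require Import ring.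
Set Implicit Arguments. Unset Strict Implicit. Unset Printing Implicit Defensive.
Import GRing.Theory.
Local Open Scope ring_scope.

Section Sub.
Variable R : comNzRingType.
Variable I : R -> Prop.
Hypothesis I0 : I 0.
Hypothesis Iadd : forall x y, I x -> I y -> I (x + y).
Hypothesis Imul : forall r x, I x -> I (r * x).

Definition Ib (x : R^o) : bool := if excluded_middle_informative (I x) then true else false.
Lemma IbP x : Ib x <-> I x.
Proof. rewrite /Ib; case: excluded_middle_informative => //. Qed.

Fact Ib_closed : subsemimod_closed Ib.
Proof.
split; [split|].
- by apply/IbP.
- by move=> x y /IbP Hx /IbP Hy; apply/IbP; apply: Iadd.
- by move=> a x /IbP Hx; apply/IbP; apply: Imul.
Qed.
HB.instance Definition _ := GRing.isSubmodClosed.Build R R^o Ib Ib_closed.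

Inductive subI : predArgType := SubI (u : R^o) of Ib u.
Definition sval' w : R^o := let: SubI u _ := w in u.
HB.instance Definition _ := [isSub of subI for sval'].
HB.instance Definition _ := [Choice of subI by <:].
HB.instance Definition _ := [SubChoice_isSubZmodule of subI by <:].
HB.instance Definition _ := [SubZmodule_isSubLmodule of subI by <:].

Lemma sval_is_linear : linear (sval' : subI -> R^o). Proof. by []. Qed.
HB.instance Definition _ := GRing.isSemilinear.Build R subI R^o _ sval'
  (GRing.semilinear_linear sval_is_linear).

Variable E : lmodType R.
Variable g : R -> E.
Hypothesis gadd : forall x y, I x -> I y -> g (x + y) = g x + g y.
Hypothesis gscale : forall r x, I x -> g (r * x) = r *: g x.

Definition gs (w : subI) : E := g (sval' w).
Lemma gs_is_linear : linear gs.
Proof.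
move=> a [x Hx] [y Hy]; rewrite /gs /=.
have Hx' := (IbP x).1 Hx; have Hy' := (IbP y).1 Hy.
rewrite gadd //; last by apply: Imul.
by rewrite gscale.
Qed.
HB.instance Definition _ := GRing.isSemilinear.Build R subI E _ gs
  (GRing.semilinear_linear gs_is_linear).

Lemma baer_ext :
  (forall (M N : lmodType R) (f : {linear M -> N}) (g : {linear M -> E}),
    injective f -> exists h : {linear N -> E}, forall x, h (f x) = g x) ->
  exists e : E, forall x, I x -> x *: e = g x.
Proof.
move=> inj.
have finj : injective (sval' : subI -> R^o) by move=> [x Hx] [y Hy] /= Exy; subst; congr SubI; apply: bool_irrelevance.
have [h Hh] := inj _ _ (sval' : {linear subI -> R^o}) (gs : {linear subI -> E}) finj.
exists (h 1) => x Ix.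
have Ixb : Ib x by apply/IbP.
have := Hh (SubI Ixb); rewrite /= /gs /= => <-.
by rewrite -linearZ /= [_ *: _]mulr1.
Qed.
End Sub.

Section Main.
Variable R : comNzRingType.
Variables (p : nat).

Lemma tz_add (M : lmodType R) n (s s' : R) (v : M) :
  frob_tensor_zero p n s v -> frob_tensor_zero p n s' v -> frob_tensor_zero p n (s + s') v.
Proof. move=> H1 H2 N beta Hb; have [Ha _ _] := Hb; by rewrite Ha (H1 _ _ Hb) (H2 _ _ Hb) addr0. Qed.

Lemma tz_0 (M : lmodType R) n (v : M) : frob_tensor_zero p n 0 v.
Proof.
move=> N beta [Ha _ _]; have := Ha 0 0 v; rewrite addr0 => /eqP.
move/eqP/(congr1 (fun z => z - beta 0 v)); rewrite subrr addrK => E0.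
by rewrite -E0.
Qed.

Lemma tz_mull (M : lmodType R) n (r s : R) (v : M) :
  frob_tensor_zero p n s v -> frob_tensor_zero p n (r * s) v.
Proof.
move=> H N beta [Ha Hb Hc].
apply: (H N (fun s v => beta (r * s) v)); split.
- by move=> x y w; rewrite mulrDr Ha.
- by move=> x w w'; rewrite Hb.
- by move=> x t w; rewrite mulrA Hc.
Qed.

Lemma tz_move (M : lmodType R) n (r s : R) (v : M) :
  frob_tensor_zero p n (s * r ^+ (p ^ n)) v -> frob_tensor_zero p n s (r *: v).
Proof. move=> H N beta Hb; have [_ _ Hc] := Hb; by rewrite -Hc (H _ _ Hb). Qed.

End Main.

Section Main2.
Variable R : comNzRingType.
Variables (p : nat) (m : R -> Prop) (E : lmodType R).

Definition idsum (a1 a2 : R -> Prop) : R -> Prop :=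
  fun x => exists y z, [/\ a1 y, a2 z & x = y + z].

Lemma idsum_ideal a1 a2 : is_idealP a1 -> is_idealP a2 -> is_idealP (idsum a1 a2).
Proof.
move=> [h0 ha hm] [k0 ka km]; split.
- by exists 0, 0; rewrite addr0.
- move=> x y [y1 [z1 [A1 A2 ->]]] [y2 [z2 [B1 B2 ->]]].
  by exists (y1 + y2), (z1 + z2); split; [apply: ha|apply: ka|ring].
- move=> r x [y1 [z1 [A1 A2 ->]]].
  by exists (r * y1), (r * z1); split; [apply: hm|apply: km|ring].
Qed.

Lemma idsum_fs a1 a2 : is_idealP a1 -> is_idealP a2 ->
  fully_special p E a1 -> fully_special p E a2 -> fully_special p E (idsum a1 a2).
Proof.
move=> [h0 _ _] [k0 _ _] F1 F2 e He r n [y [z [Ay Az ->]]].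
apply: tz_add.
- apply: F1 => // s As; apply: He; exists s, 0; split => //; by rewrite addr0.
- apply: F2 => // s As; apply: He; exists 0, s; split => //; by rewrite add0r.
Qed.

End Main2.

Theorem corollary1p10 (p : nat) (R : comNzRingType) (m : R -> Prop)
  (E : lmodType R) :
  p \in [pchar R]%R ->
  noetherian_ring R ->
  local_ring m ->
  injective_hull_residue m E ->
  F_pure R p ->
  exists b : R -> Prop,
    [/\ proper_idealP b, fully_special p E b,
        (forall a : R -> Prop, proper_idealP a -> fully_special p E a ->
            subideal a b)
      & prime_idealP b].
Proof.
move=> pch _ [[[m0 madd mmul] m1] mmax] [injE _] _.
pose B := fun x => exists a, [/\ proper_idealP a, fully_special p E a & a x].
have B0 : B 0.
  exists (fun x : R => x = 0); split => //.
  + split; [split|].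
    * by [].
    * by move=> x y -> ->; rewrite addr0.
    * by move=> r x ->; rewrite mulr0.
    * by move/eqP; rewrite oner_eq0.
  + by move=> e _ r n ->; apply: tz_0.
have Badd : forall x y, B x -> B y -> B (x + y).
  move=> x y [a1 [[I1 P1] F1 X1]] [a2 [[I2 P2] F2 X2]].
  exists (idsum a1 a2); split.
  + split; first exact: idsum_ideal.
    move=> [y1 [z1 [A1 A2 E1]]]; apply: m1.
    have := mmax a1 (conj I1 P1) y1 A1; have := mmax a2 (conj I2 P2) z1 A2.
    by rewrite E1 => H1 H2; apply: madd.
  + exact: idsum_fs.
  + by exists x, y.
have Bmul : forall r x, B x -> B (r * x).
  move=> r x [a [[[a0 aa am] P] F X]]; exists a; split.
  + by split => //; split.
  + exact: F.
  + exact: am.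
have B1 : ~ B 1 by move=> [a [[_ P] _ X]].
have Bid : is_idealP B by split.
have Bfs : fully_special p E B.
  move=> e He r n [a0 [Pa Fa ar]]; apply: (Fa) => // s As; apply: He; rewrite /B; by exists a0; split.
have Bmax : forall a, proper_idealP a -> fully_special p E a -> subideal a B.
  by move=> a Pa Fa x ax; rewrite /B; exists a; split.
exists B; split => //.
split => // x y Bxy.
case: (classic (B x)) => Bx; [by left|right].
pose C := fun s => B (s * x).
have CP : proper_idealP C.
  split; last by rewrite /C mul1r.
  split; rewrite /C.
  + by rewrite mul0r.
  + by move=> s t Hs Ht; rewrite mulrDl; apply: Badd.
  + by move=> r s Hs; rewrite -mulrA; apply: Bmul.
have CF : fully_special p E C.
  move=> e HC r n Cr.
  pose S' := fun z => exists s t, B t /\ z = t + s * x.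
  pose g := fun z => match excluded_middle_informative (S' z) with
     | left H => (proj1_sig (constructive_indefinite_description _ H)) *: e
     | right _ => 0 end.
  have gdec : forall z t s, B t -> z = t + s * x -> g z = s *: e.
    move=> z t s Bt Ez; rewrite /g; case: excluded_middle_informative => [H|H]; last first.
      by exfalso; apply: H; exists s, t.
    case: constructive_indefinite_description => s' /= [t' [Bt' Ez']].
    apply/eqP; rewrite -subr_eq0 -scalerBl; apply/eqP; apply: HC; rewrite /C.
    have E1 : t' + s' * x = t + s * x by rewrite -Ez -Ez'.
    have -> : (s' - s) * x = t + (-1) * t'.
      have -> : t = (t + s * x) - s * x by rewrite addrK.
      rewrite -E1; ring.
    by apply: Badd => //; apply: Bmul.
  have S0 : S' 0 by exists 0, 0; split => //; rewrite mul0r addr0.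
  have Sadd : forall z1 z2, S' z1 -> S' z2 -> S' (z1 + z2).
    move=> z1 z2 [s1 [t1 [T1 ->]]] [s2 [t2 [T2 ->]]].
    by exists (s1 + s2), (t1 + t2); split; [apply: Badd|ring].
  have Smul : forall r z, S' z -> S' (r * z).
    move=> r' z [s1 [t1 [T1 ->]]].
    by exists (r' * s1), (r' * t1); split; [apply: Bmul|ring].
  have gadd : forall z1 z2, S' z1 -> S' z2 -> g (z1 + z2) = g z1 + g z2.
    move=> z1 z2 [s1 [t1 [T1 E1]]] [s2 [t2 [T2 E2]]].
    rewrite (gdec _ _ _ T1 E1) (gdec _ _ _ T2 E2) (gdec _ (t1 + t2) (s1 + s2)).
    - by rewrite scalerDl.
    - by apply: Badd.
    - by rewrite E1 E2; ring.
  have gscale : forall r z, S' z -> g (r * z) = r *: g z.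
    move=> r' z [s1 [t1 [T1 E1]]].
    rewrite (gdec _ _ _ T1 E1) (gdec _ (r' * t1) (r' * s1)).
    - by rewrite scalerA.
    - by apply: Bmul.
    - by rewrite E1; ring.
  have [e' He'] := baer_ext S0 Sadd Smul gadd gscale injE.
  have Be' : forall t, B t -> t *: e' = 0.
    move=> t Bt; rewrite He'; last by exists 0, t; split => //; rewrite mul0r addr0.
    by rewrite (gdec _ t 0 Bt) ?scale0r // mul0r addr0.
  have xe' : x *: e' = e.
    rewrite He'; last by exists 1, 0; split => //; rewrite mul1r add0r.
    by rewrite (gdec _ 0 1 B0) ?scale1r // mul1r add0r.
  rewrite -xe'; apply: tz_move; apply: Bfs => //.
  have pg : (0 < p ^ n)%N by rewrite expn_gt0 prime_gt0 // (pcharf_prime pch).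
  rewrite -(prednK pg) exprS.
  have -> : r * (x * x ^+ (p ^ n).-1) = x ^+ (p ^ n).-1 * (r * x) by ring.
  by apply: Bmul.
apply: (Bmax C CP CF); rewrite /C mulrC; exact: Bxy.
Qed.
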